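(* Let $V:\mathbb{C}^7\to\mathbb{C}^3\otimes\mathbb{C}^3$ be any isometry whose range is the orthogonal complement of $\operatorname{span}\{\ket{\phi_3^+},\ket{0}\otimes\ket{1}\}$, where $\ket{\phi_3^+}=\frac1{\sqrt3}\sum_{k=0}^2\ket{k}\otimes\ket{k}$, and let $\mathcal{N}_7^V:\mathcal{L}(\mathbb{C}^7)\to\mathcal{L}(\mathbb{C}^3)$ be $\mathcal{N}_7^V(\rho)=\operatorname{Tr}_E(V\rho V^\dagger)$ (trace over the second tensor factor). Then for every $p\in[0,1]$, $M_7(p)\in\mathcal{P}^{7\to7}_{\min}(\mathcal{N}_7^V,V)$, and for every $p\in(0,1]$ and every $\tilde d\le 6$, $M_7(p)\notin\mathcal{P}^{7\to7}(\mathcal{Q}_{\tilde d})$. Consequently $\mathcal{P}^{7\to 7}_{\min}(\mathcal{N}_7^V,V)\not\subseteq\mathcal{P}^{7\to7}(\mathcal{Q}_{\tilde d})$ for all $\tilde d<7$, i.e. minimal environment assistance optimally unlocks the encoding strength of $\mathcal{N}_7^V$.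
   Context: $M_7(p)=\mathbb{I}_5\oplus\begin{pmatrix}p&1-p\\ p/3&1-p/3\end{pmatrix}$ (a $7\times7$ block-diagonal row-stochastic matrix). $\mathcal{P}^{n\to m}(\mathcal{Q}_d)$ is the set of $n\times m$ matrices $P_{ij}=\operatorname{Tr}[\Lambda_j\rho_i]$ with $\rho_i$ density matrices on $\mathbb{C}^d$ and $\{\Lambda_j\}_{j=1}^m$ a POVM on $\mathbb{C}^d$. For a channel $\mathcal{N}$ with isometry $V:\mathbb{C}^{d_A}\to\mathbb{C}^{d_B}\otimes\mathbb{C}^{d_E}$ (first factor receiver $B$, second environment $E$), $\mathcal{N}(\rho)=\operatorname{Tr}_E(V\rho V^\dagger)$, the set $\mathcal{P}^{n\to m}_{\min}(\mathcal{N},V)$ (minimal environment assistance) consists of the $n\times m$ matrices $P_{ij}=\sum_{l,k}q(j\mid l,k)\operatorname{Tr}[(\Lambda^B_l\otimes\Lambda^E_k)V\rho_iV^\dagger]$, where $\rho_i$ are density matrices on $\mathbb{C}^{d_A}$, $\{\Lambda^B_l\}$ and $\{\Lambda^E_k\}$ are finite-outcome POVMs on $\mathbb{C}^{d_B}$ and $\mathbb{C}^{d_E}$, and $q(\cdot\mid l,k)$ is a probability distribution on $\{1,\dots,m\}$ for each $(l,k)$. *)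

(* Defs.v *)
From HB Require Import structures.
From mathcomp Require Import all_boot all_order all_algebra.
From mathcomp Require Import reals complex mxtens.
Set Implicit Arguments. Unset Strict Implicit. Unset Printing Implicit Defensive.
Import Order.TTheory GRing.Theory Num.Theory.
Local Open Scope ring_scope.

Section QDefs.
Variable R : realType.
Local Notation C := R[i].

Definition toC (x : R) : C := Complex x 0.

Definition adj m n (A : 'M[C]_(m, n)) : 'M[C]_(n, m) :=
  \matrix_(i, j) (A j i)^*.

Definition psd n (A : 'M[C]_n) : Prop :=
  A = adj A /\ forall v : 'cV[C]_n, 0 <= (adj v *m A *m v) 0 0.

Definition density n (rho : 'M[C]_n) : Prop := psd rho /\ \tr rho = 1.

Definition povm d k (L : 'I_k -> 'M[C]_d) : Prop :=
  (forall j, psd (L j)) /\ \sum_(j < k) L j = 1%:M.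

(* isometry V : C^dA -> C^dB (x) C^dE, first tensor factor = receiver B *)
Definition is_isometry dA dB dE (V : 'M[C]_(dB * dE, dA)) : Prop :=
  adj V *m V = 1%:M.

Definition PQ d n m (P : 'M[R]_(n, m)) : Prop :=
  exists (rho : 'I_n -> 'M[C]_d) (L : 'I_m -> 'M[C]_d),
    (forall i, density (rho i)) /\ povm L /\
    forall i j, toC (P i j) = \tr (L j *m rho i).

(* P^{n->m}_min(N, V) for the channel N(rho) = Tr_E (V rho V^dagger),
   which depends only on the isometry V. *)
Definition Pmin dA dB dE (V : 'M[C]_(dB * dE, dA)) n m (P : 'M[R]_(n, m)) : Prop :=
  exists (rho : 'I_n -> 'M[C]_dA) (kB kE : nat)
         (LB : 'I_kB -> 'M[C]_dB) (LE : 'I_kE -> 'M[C]_dE)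
         (q : 'I_kB -> 'I_kE -> 'I_m -> R),
    (forall i, density (rho i)) /\ povm LB /\ povm LE /\
    (forall l k j, 0 <= q l k j) /\
    (forall l k, \sum_(j < m) q l k j = 1) /\
    forall i j, toC (P i j) =
      \sum_(l < kB) \sum_(k < kE)
        toC (q l k j) * \tr ((LB l *t LE k) *m (V *m rho i *m adj V)).

Definition ket3 (k : 'I_3) : 'cV[C]_3 := delta_mx k 0.

Definition phi3 : 'M[C]_(3 * 3, 1 * 1) :=
  (sqrtC 3)^-1 *: \sum_(k < 3) (ket3 k *t ket3 k).

Definition ket01 : 'M[C]_(3 * 3, 1 * 1) := ket3 0 *t ket3 1.

Definition range_is_perp (V : 'M[C]_(3 * 3, 7)) : Prop :=
  forall x : 'cV[C]_(3 * 3),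
    (exists y : 'cV[C]_7, x = V *m y) <->
    (adj phi3 *m x = 0 /\ adj ket01 *m x = 0).

Definition M7 (p : R) : 'M[R]_7 :=
  block_mx (1%:M : 'M[R]_5) 0 0
    (\matrix_(i < 2, j < 2)
       if (i == 0 :> nat) then (if (j == 0 :> nat) then p else 1 - p)
       else (if (j == 0 :> nat) then p / 3 else 1 - p / 3)).

End QDefs.

(* Main.v *)
Require Import Defs.
From HB Require Import structures.
From mathcomp Require Import all_boot all_order all_algebra.
From mathcomp Require Import reals complex mxtens.
From mathcomp Require Import sesquilinear spectral.
From mathcomp Require Import ring lra.
Import Order.TTheory GRing.Theory Num.Theory.
Local Open Scope ring_scope.
Local Open Scope sesquilinear_scope.
Section S.
Variable R : realType.
Local Notation C := R[i].

Lemma sum_tens m n (g : 'I_(m * n) -> C) :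
  \sum_x g x = \sum_(a < m) \sum_(b < n) g (mxtens_index (a, b)).
Proof.
rewrite pair_big /= (reindex (@mxtens_index m n)) /=.
  by apply: eq_bigr => -[a b].
by exists (@mxtens_unindex m n) => x _; [rewrite mxtens_indexK | rewrite mxtens_unindexK].
Qed.

Lemma tensE m n p q (A : 'M[C]_(m, n)) (B : 'M[C]_(p, q)) a b x :
  (A *t B) (mxtens_index (a, b)) x = A a (mxtens_unindex x).1 * B b (mxtens_unindex x).2.
Proof. by rewrite mxE mxtens_indexK. Qed.

Lemma ket3E k a (x : 'I_1) : ket3 R k a x = (a == k)%:R.
Proof. by rewrite mxE ord1 eqxx andbT. Qed.

Lemma phi3E a b (x : 'I_(1 * 1)) :
  phi3 R (mxtens_index (a, b)) x = (sqrtC 3)^-1 * (a == b)%:R.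
Proof.
rewrite mxE summxE; congr (_ * _).
under eq_bigr => k _ do rewrite tensE !ket3E.
case: (eqVneq a b) => [<-|neq].
  rewrite (bigD1 a) //= eqxx mulr1 big1 ?addr0 // => k ka.
  by rewrite eq_sym (negbTE ka) mulr0.
rewrite big1 // => k _.
case: (eqVneq a k) => [ak|]; last by rewrite mul0r.
by rewrite -ak [b == a]eq_sym (negbTE neq) mulr0.
Qed.

Lemma ket01E a b (x : 'I_(1 * 1)) :
  ket01 R (mxtens_index (a, b)) x = ((a == 0) && (b == 1))%:R.
Proof. by rewrite tensE !ket3E; case: (a == 0); rewrite ?mul1r ?mul0r. Qed.


Lemma tr_delta n (x : 'I_n) (M : 'M[C]_n) : \tr (delta_mx x x *m M) = M x x.
Proof.
rewrite /mxtrace (bigD1 x) //= big1 ?addr0.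
  rewrite mxE (bigD1 x) //= big1 ?addr0 ?mxE ?eqxx ?mul1r //; last first.
  by move=> j /negbTE jx; rewrite mxE jx andbF mul0r.
by move=> i /negbTE ix; rewrite mxE big1 // => j _; rewrite mxE ix mul0r.
Qed.

Lemma tens_delta (l k : 'I_3) :
  (delta_mx l l : 'M[C]_3) *t (delta_mx k k : 'M[C]_3) =
  delta_mx (mxtens_index (l, k)) (mxtens_index (l, k)).
Proof.
apply/matrixP => x y; rewrite !mxE.
rewrite -[x]mxtens_unindexK -[y]mxtens_unindexK !mxtens_indexK.
rewrite !(inj_eq (can_inj (@mxtens_indexK 3 3))).
case: (mxtens_unindex x) => a b; case: (mxtens_unindex y) => a' b' /=.
rewrite !xpair_eqE.
by case: (a == l); case: (a' == l); case: (b == k); case: (b' == k);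
  rewrite /= ?mul1r ?mul0r.
Qed.

Definition vec (f : 'I_3 -> 'I_3 -> R) : 'cV[C]_(3 * 3) :=
  \col_x ((f (mxtens_unindex x).1 (mxtens_unindex x).2)%:C)%C.

Lemma vecE f a b (x : 'I_1) : vec f (mxtens_index (a, b)) x = ((f a b)%:C)%C.
Proof. by rewrite mxE mxtens_indexK. Qed.

Lemma conjR (c : R) : ((c%:C)%C)^* = (c%:C)%C.
Proof. by apply: conj_Creal; apply/complex_realP; exists c. Qed.

Lemma prob (l k : 'I_3) (c : R) f :
  \tr (((delta_mx l l : 'M[C]_3) *t (delta_mx k k : 'M[C]_3)) *m
        ((c%:C)%C *: (vec f *m adj (vec f)))) = ((c * f l k ^+ 2)%:C)%C.
Proof.
rewrite tens_delta tr_delta !mxE big_ord1 !mxE mxtens_indexK conjR.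
by rewrite expr2 !rmorphM.
Qed.


Lemma sum_sel1 n (s : C) (a : 'I_n) g :
  \sum_b (s * (a == b)%:R)^* * g b = s^* * g a.
Proof.
rewrite (bigD1 a) //= eqxx mulr1 big1 ?addr0 // => b /negbTE ba.
by rewrite eq_sym ba mulr0 conjC0 mul0r.
Qed.

Lemma sum_sel2 m n (a0 : 'I_m) (b0 : 'I_n) g :
  \sum_a \sum_b (((a == a0) && (b == b0))%:R)^* * g a b = g a0 b0 :> C.
Proof.
rewrite (bigD1 a0) //= [X in _ + X]big1 ?addr0; last first.
  move=> a /negbTE aa; rewrite big1 // => b _.
  by rewrite aa /= conjC0 mul0r.
rewrite (bigD1 b0) //= !eqxx /= conjC1 mul1r big1 ?addr0 // => b /negbTE bb.
by rewrite bb ?andbF /= conjC0 mul0r.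
Qed.

Lemma vec_perp f : \sum_a f a a = 0 -> f 0 1 = 0 ->
  adj (phi3 R) *m vec f = 0 /\ adj (ket01 R) *m vec f = 0.
Proof.
move=> Hd H01; split; apply/matrixP => i j; rewrite !ord1 !mxE sum_tens.
  under eq_bigr => a _ do under eq_bigr => b _ do rewrite mxE phi3E vecE.
  under eq_bigr => a _ do rewrite sum_sel1.
  by rewrite -mulr_sumr -rmorph_sum /= Hd mulr0.
under eq_bigr => a _ do under eq_bigr => b _ do rewrite mxE ket01E vecE.
by rewrite sum_sel2 H01.
Qed.


Lemma adjE m n (A : 'M[C]_(m, n)) : adj A = A ^t*.
Proof. by apply/matrixP => i j; rewrite !mxE. Qed.

Lemma adjM m n p (A : 'M[C]_(m, n)) (B : 'M[C]_(n, p)) :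
  adj (A *m B) = adj B *m adj A.
Proof. by rewrite !adjE trmx_mul map_mxM. Qed.

Lemma adjK m n (A : 'M[C]_(m, n)) : adj (adj A) = A.
Proof. by rewrite !adjE trmxCK. Qed.

Lemma adjZ m n (c : C) (A : 'M[C]_(m, n)) : adj (c *: A) = c^* *: adj A.
Proof. by apply/matrixP => i j; rewrite !mxE rmorphM. Qed.

Lemma mul11 m (A : 'M[C]_(1, m)) (B : 'M[C]_(m, 1)) :
  (A *m B) 0 0 = \sum_k A 0 k * B k 0.
Proof. by rewrite mxE. Qed.

Lemma dens_state n N (V : 'M[C]_(N, n)) (psi : 'cV[C]_N) (c : R) :
  adj V *m V = 1%:M -> (exists y, psi = V *m y) -> 0 <= c ->
  (c%:C)%C * (adj psi *m psi) 0 0 = 1 ->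
  density ((c%:C)%C *: ((adj V *m psi) *m adj (adj V *m psi))) /\
  V *m ((c%:C)%C *: ((adj V *m psi) *m adj (adj V *m psi))) *m adj V =
  (c%:C)%C *: (psi *m adj psi).
Proof.
move=> iso [y0 ->] c0 Hc.
have -> : adj V *m (V *m y0) = y0 by rewrite mulmxA iso mul1mx.
split; last by rewrite -scalemxAr -scalemxAl adjM !mulmxA.
split; last first.
  rewrite mxtraceZ mxtrace_mulC /mxtrace big_ord1 -Hc; congr (_ * _).
  by rewrite adjM mulmxA -[adj y0 *m adj V *m V]mulmxA iso mulmx1.
split.
  by rewrite adjZ conjR adjM adjK.
move=> v.
rewrite -scalemxAr -scalemxAl mxE !mulmxA -[adj v *m y0 *m adj y0 *m v]mulmxA.
have -> : adj y0 *m v = adj (adj v *m y0) by rewrite adjM adjK.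
set z := adj v *m y0.
rewrite mxE big_ord1 [adj z _ _]mxE.
by apply: mulr_ge0; [rewrite ler0c | apply: mul_conjC_ge0].
Qed.


Lemma psd_outer n (c : R) (y0 : 'cV[C]_n) : 0 <= c ->
  psd ((c%:C)%C *: (y0 *m adj y0)).
Proof.
move=> c0; split.
  by rewrite adjZ conjR adjM adjK.
move=> v.
rewrite -scalemxAr -scalemxAl mxE !mulmxA -[adj v *m y0 *m adj y0 *m v]mulmxA.
have -> : adj y0 *m v = adj (adj v *m y0) by rewrite adjM adjK.
set z := adj v *m y0.
rewrite mxE big_ord1 [adj z _ _]mxE.
by apply: mulr_ge0; [rewrite ler0c | apply: mul_conjC_ge0].
Qed.

Lemma povm_delta n : povm (fun l : 'I_n => (delta_mx l l : 'M[C]_n)).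
Proof.
split; last by rewrite -mx1_sum_delta.
move=> l.
have -> : (delta_mx l l : 'M[C]_n) =
   ((1%:C)%C *: ((delta_mx l 0 : 'cV[C]_n) *m adj (delta_mx l 0 : 'cV[C]_n))).
  have -> : adj (delta_mx l 0 : 'cV[C]_n) = delta_mx 0 l.
    by apply/matrixP => i j; rewrite !mxE conjC_nat andbC.
  by rewrite mul_delta_mx scale1r.
by apply: psd_outer.
Qed.

Lemma psd_conj_diag n (S M : 'M[C]_n) i : psd M -> 0 <= (S *m M *m S ^t*) i i.
Proof.
case=> _ /(_ ((row i S)^t* )); rewrite adjE trmxCK.
suff -> : (S *m M *m S ^t*) i i = (row i S *m M *m (row i S)^t*) 0 0 by [].
rewrite -row_mul !mxE; apply: eq_bigr => k _; rewrite !mxE.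
done.
Qed.

Lemma tr_le n (L rho : 'M[C]_n) : psd L -> density rho -> \tr (L *m rho) <= \tr L.
Proof.
move=> HL [Hr Htr].
have Hn : rho \is normalmx.
  by apply/normalmxP; case: Hr; rewrite adjE => <- _.
set S := spectralmx rho; set D := spectral_diag rho.
have HU : S \is unitarymx by apply: spectral_unitarymx.
have E := orthomx_spectralP Hn; rewrite -/S -/D invmx_unitary // in E.
have SS : S *m S^t* = 1%:M by apply/unitarymxP.
have SS' : S^t* *m S = 1%:M.
  by rewrite -invmx_unitary // mulVmx // unitarymx_unit.
have Ed : S *m rho *m S^t* = diag_mx D.
  by rewrite E !mulmxA SS mul1mx -!mulmxA SS mulmx1.
have HD i : 0 <= D 0 i.
  by have := @psd_conj_diag _ S rho i Hr; rewrite Ed mxE eqxx mulr1n.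
have HsD : \sum_i D 0 i = 1.
  by rewrite -Htr -mxtrace_diag -Ed mxtrace_mulC mulmxA SS' mul1mx.
have HD1 i : D 0 i <= 1.
  by rewrite -HsD (bigD1 i) //= lerDl sumr_ge0.
set K := S *m L *m S^t*.
have HK i : 0 <= K i i by apply: psd_conj_diag.
have -> : \tr L = \tr K by rewrite /K mxtrace_mulC mulmxA SS' mul1mx.
have -> : \tr (L *m rho) = \sum_i K i i * D 0 i.
  rewrite E !mulmxA mxtrace_mulC !mulmxA -/K.
  rewrite /mxtrace; apply: eq_bigr => i _.
  by rewrite mul_mx_diag mxE.
rewrite /mxtrace; apply: ler_sum => i _.
by rewrite -subr_ge0 -{1}(mulr1 (K i i)) -mulrBr mulr_ge0 // subr_ge0.
Qed.

Lemma trM7 (p : R) : \tr (M7 p) = 5 + p + (1 - p / 3).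
Proof.
rewrite /M7 (mxtrace_block (1%:M : 'M[R]_5)) mxtrace1.
rewrite /mxtrace !big_ord_recr big_ord0 /= !mxE /=. 
lra.
Qed.

Lemma part2 (p : R) : 0 < p <= 1 -> forall d : nat, (d <= 6)%N -> ~ PQ d (M7 p).
Proof.
move=> /andP[p0 p1] d d6 [rho [L [Hr [[HL HS] Heq]]]].
have H1 : (\tr (M7 p))%:C%C <= (d%:R : C).
  rewrite /mxtrace rmorph_sum /=.
  rewrite -(mxtrace1 C d) -HS raddf_sum.
  apply: ler_sum => j _.
  rewrite [X in X <= _](_ : _ = \tr (L j *m rho j)); first exact: tr_le.
  by rewrite -Heq.
move: H1; rewrite -(rmorph_nat (real_complex R)) lecR trM7.
have : (d%:R : R) <= 6 by rewrite (ler_nat R d 6).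
lra.
Qed.
Definition fn (i l k : nat) : R :=
  match i, l, k with
  | 0, 0, 2 => 1 | 1, 1, 0 => 1 | 2, 1, 2 => 1 | 3, 2, 0 => 1 | 4, 2, 1 => 1
  | 5, 0, 0 => 1 | 5, 1, 1 => -1
  | 6, 0, 0 => 1 | 6, 1, 1 => 1 | 6, 2, 2 => -2
  | _, _, _ => 0 end.

Definition cn (i : nat) : R :=
  match i with 5 => 1 / 2 | 6 => 1 / 6 | _ => 1 end.

Definition qn (p : R) (l k j : nat) : R :=
  match l, k with
  | 0, 2 => (j == 0)%:R
  | 1, 0 => (j == 1)%:R
  | 1, 2 => (j == 2)%:R
  | 2, 0 => (j == 3)%:R
  | 2, 1 => (j == 4)%:R
  | 0, 0 | 1, 1 => if j == 5 then p else if j == 6 then 1 - p else 0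
  | _, _ => (j == 6)%:R end.

Lemma M7E (p : R) (i j : 'I_7) : M7 p i j =
  if (i < 5)%N then ((i == j :> nat)%:R : R) else if (j < 5)%N then (0 : R) else
  if (i == 5 :> nat) then (if (j == 5 :> nat) then p else 1 - p)
  else (if (j == 5 :> nat) then p / 3 else 1 - p / 3).
Proof.
rewrite /M7 /block_mx mxE; case: splitP => [i' ->|i' ->]; rewrite mxE;
  case: splitP => [j' ->|j' ->]; rewrite !mxE /=;
  case: i' => [[|[|[|[|[|]]]]] ?] //; case: j' => [[|[|[|[|[|]]]]] ?] //.
Qed.

Lemma entries p (i j : 'I_7) :
  M7 p i j = \sum_(l < 3) \sum_(k < 3) qn p l k j * (cn i * fn i l k ^+ 2).
Proof.
rewrite !big_ord_recr !big_ord0 /=.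
case: i => [[|[|[|[|[|[|[|//]]]]]]] Hi];
case: j => [[|[|[|[|[|[|[|//]]]]]]] Hj]; rewrite M7E /=; lra.
Qed.

Lemma fn_diag (i : 'I_7) : \sum_(a < 3) fn i a a = 0.
Proof.
rewrite !big_ord_recr big_ord0 /=.
case: i => [[|[|[|[|[|[|[|//]]]]]]] Hi] /=; lra.
Qed.

Lemma fn01 (i : 'I_7) : fn i 0 1 = 0.
Proof. by case: i => [[|[|[|[|[|[|[|//]]]]]]] Hi]. Qed.

Lemma fn_norm (i : 'I_7) :
  cn i * \sum_(a < 3) \sum_(b < 3) fn i a b ^+ 2 = 1.
Proof.
rewrite !big_ord_recr !big_ord0 /=.
case: i => [[|[|[|[|[|[|[|//]]]]]]] Hi] /=; lra.
Qed.

Lemma cn_ge0 (i : 'I_7) : 0 <= cn i.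
Proof. case: i => [[|[|[|[|[|[|[|//]]]]]]] Hi] /=; lra. Qed.

Lemma qn_ge0 (p : R) (l k j : nat) : 0 <= p <= 1 -> 0 <= qn p l k j.
Proof.
move=> /andP[p0 p1].
case: l => [|[|[|l]]]; case: k => [|[|[|k]]] /=;
  rewrite ?ler0n //; case: ifP => _ //; case: ifP => _ //; by rewrite subr_ge0.
Qed.

Lemma qn_sum (p : R) (l k : 'I_3) : \sum_(j < 7) qn p l k j = 1.
Proof.
rewrite !big_ord_recr big_ord0 /=.
case: l => [[|[|[|//]]] Hl]; case: k => [[|[|[|//]]] Hk] /=; lra.
Qed.


Lemma normvec f :
  (adj (vec f) *m vec f) 0 0 = ((\sum_(a < 3) \sum_(b < 3) f a b ^+ 2)%:C)%C.
Proof.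
rewrite mxE sum_tens rmorph_sum; apply: eq_bigr => a _.
rewrite rmorph_sum; apply: eq_bigr => b _.
by rewrite !mxE mxtens_indexK conjR -rmorphM expr2.
Qed.

Lemma part1 (V : 'M[C]_(3 * 3, 7)) : is_isometry V -> range_is_perp V ->
  forall p : R, 0 <= p <= 1 -> Pmin V (M7 p).
Proof.
move=> iso rng p hp.
pose psi (i : 'I_7) := vec (fun a b => fn i a b).
have Hin i : exists y, psi i = V *m y.
  by apply/rng; apply: vec_perp; [exact: fn_diag | exact: fn01].
have Hn (i : 'I_7) : ((cn i)%:C)%C * (adj (psi i) *m psi i) 0 0 = 1.
  by rewrite normvec -rmorphM fn_norm.
have D (i : 'I_7) := @dens_state _ _ V (psi i) (cn i) iso (Hin i) (cn_ge0 i) (Hn i).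
exists (fun i : 'I_7 => ((cn i)%:C)%C *: ((adj V *m psi i) *m adj (adj V *m psi i))),
  3, 3, (fun l => delta_mx l l), (fun k => delta_mx k k), (fun l k j => qn p l k j).
split; first by move=> i; case: (D i).
split; first exact: povm_delta.
split; first exact: povm_delta.
split; first by move=> l k j; apply: qn_ge0.
split; first by move=> l k; apply: qn_sum.
move=> i j; rewrite (D i).2.
under eq_bigr => l _ do under eq_bigr => k _ do rewrite prob.
transitivity (toC (\sum_(l < 3) \sum_(k < 3) qn p l k j * (cn i * fn i l k ^+ 2))).
  by rewrite entries.
rewrite /toC -/(real_complex R _) rmorph_sum; apply: eq_bigr => l _.
by rewrite rmorph_sum; apply: eq_bigr => k _; rewrite rmorphM.
Qed.

Lemma one_in01 (p : R) : p = 1 -> 0 <= p <= 1.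
Proof. move=> ->; apply/andP; split; lra. Qed.
Lemma one_in01' (p : R) : p = 1 -> 0 < p <= 1.
Proof. move=> ->; apply/andP; split; lra. Qed.

End S.

Local Close Scope sesquilinear_scope.

Theorem theorem1 (R : realType) (V : 'M[R[i]]_(3 * 3, 7)) :
  is_isometry V -> range_is_perp V ->
  (forall p : R, 0 <= p <= 1 -> Pmin V (M7 p)) /\
  (forall p : R, 0 < p <= 1 -> forall d : nat, (d <= 6)%N -> ~ PQ d (M7 p)) /\
  (forall d : nat, (d < 7)%N ->
     ~ (forall P : 'M[R]_(7, 7), Pmin V P -> PQ d P)).
Proof.
move=> iso rng.
have P1 := @part1 R V iso rng.
have P2 := @part2 R.
split; first exact: P1.
split; first exact: P2.
move=> d d7 H.
have h1 := @one_in01 R 1 erefl.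
have h2 := @one_in01' R 1 erefl.
exact: (P2 1 h2 d d7 (H _ (P1 1 h1))).
Qed.
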